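(* Let $M$ be a matroid on ground set $E$ and let $<$ be a pinned broken line shelling of $\mathcal{I}(M)$ whose first basis is $B$. For each non-loop element $i\in E\setminus B$, let $B_i$ be the basis whose restriction set with respect to $<$ is $\{i\}$. Let $I$ be an independent set of $M$ disjoint from $B$. Then for every $j\ge0$, the number of bases $B'$ whose restriction set has $|I|+j$ elements and such that the atoms of $\mathrm{Int}_<(M)$ below $B'$ are exactly the bases $\{B_i : i\in I\}$ is $h_j((M/I)|_B)$. If $\mathrm{Int}_<(M)$ is ranked, then the cardinality of the restriction sets may be replaced by the rank in $\mathrm{Int}_<(M)$.
   Context: Linear functionals $\ell\in(\mathbb{R}^E)^*$ are identified with functions $E\to\mathbb{R}$, and $\ell(B)=\sum_{b\in B}\ell(b)$. A broken line shelling is an ordering $B_1<\dots<B_n$ of all bases of $M$ such that for each $i$ there is a linear functional $\ell_i$ (a witness) with $\ell_i(B_j)<\ell_i(B_i)$ iff $j<i$; such an order is a shelling order of the independence complex $\mathcal{I}(M)$. It is pinned if the witnesses can be chosen so that for every $i$, $B_1$ is the basis of smallest $\ell_i$-weight. For a shelling order $F_1<\dots<F_k$ of a pure simplicial complex, the restriction set $\mathcal{R}(F_j)$ is the unique subset of $F_j$ such that the faces of $\langle F_1,\dots,F_j\rangle$ not in $\langle F_1,\dots,F_{j-1}\rangle$ are exactly the subsets of $F_j$ containing $\mathcal{R}(F_j)$. $\mathrm{Int}_<(M)$ is the poset on bases with $B'\preceq B''$ iff $\mathcal{R}(B')\subseteq\mathcal{R}(B'')$; its atoms are the elements covering its minimum.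 A loop is an element in no basis. $M/I$ is the contraction of $M$ by $I$, and $(M/I)|_B$ its restriction to the ground set $B$. For a matroid $N$, $h_j(N)$ is the $j$-th entry of the $h$-vector of its independence complex, where for a $(d-1)$-dimensional complex with $f_{i}$ faces of dimension $i$, $\sum_j h_j x^j=\sum_j f_{j-1}x^j(1-x)^{d-j}$. *)

(* Defs.v *)
From HB Require Import structures.
From mathcomp Require Import all_boot all_order all_algebra.
From mathcomp Require Import reals.
Set Implicit Arguments. Unset Strict Implicit. Unset Printing Implicit Defensive.
Import Order.TTheory GRing.Theory Num.Theory.

Section Defs.
Variable E : finType.

(** A matroid on the ground set E (all of the finite type E), given by its
    set of bases: nonempty family satisfying basis exchange. *)
Definition matroid_bases (Bs : {set {set E}}) : Prop :=
  Bs != set0 /\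
  forall B1 B2, B1 \in Bs -> B2 \in Bs ->
    forall x, x \in B1 :\: B2 ->
      exists2 y, y \in B2 :\: B1 & (y |: (B1 :\ x)) \in Bs.

Definition indep (Bs : {set {set E}}) (X : {set E}) : bool :=
  [exists B in Bs, X \subset B].

Definition mrank (Bs : {set {set E}}) (X : {set E}) : nat :=
  \max_(Y : {set E} | (Y \subset X) && indep Bs Y) #|Y|.

(** independent sets of (M/I)|_B : J subset of B, disjoint from I, with
    r_M(J u I) = |J| + r_M(I) (independence in the contraction M/I). *)
Definition contr_restr_indep (Bs : {set {set E}}) (I B : {set E})
  (J : {set E}) : bool :=
  [&& J \subset B, [disjoint J & I] &
      mrank Bs (J :|: I) == #|J| + mrank Bs I].

(** h-vector of the (independence) simplicial complex given by a predicate
    on faces.  d = max face size (= dimension + 1),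
    fnum k = number of faces with k elements (= f_{k-1}),
    sum_j h_j x^j = sum_j f_{j-1} x^j (1-x)^(d-j). *)
Definition cx_d (ind : pred {set E}) : nat := \max_(X : {set E} | ind X) #|X|.
Definition fnum (ind : pred {set E}) (k : nat) : nat :=
  #|[set X : {set E} | ind X & #|X| == k]|.
Definition hpoly (ind : pred {set E}) : {poly int} :=
  (\sum_(k < (cx_d ind).+1)
     ((fnum ind k)%:Z%:P * 'X^k * (1 - 'X) ^+ (cx_d ind - k)))%R.
Definition hvec (ind : pred {set E}) (j : nat) : int := ((hpoly ind)`_j)%R.

Definition wt (R : realType) (l : E -> R) (B : {set E}) : R :=
  (\sum_(b in B) l b)%R.

(** s lists every basis exactly once: s = B_1 < ... < B_n (0-indexed) *)
Definition orders_bases (Bs : {set {set E}}) (s : seq {set E}) : Prop :=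
  uniq s /\ forall B, (B \in s) = (B \in Bs).

Definition broken_line_shelling (R : realType) (Bs : {set {set E}}) (s : seq {set E}) : Prop :=
  orders_bases Bs s /\
  forall i, i < size s -> exists l : E -> R,
    forall j, j < size s ->
      (wt l (nth set0 s j) < wt l (nth set0 s i))%R = (j < i).

Definition pinned_bls (R : realType) (Bs : {set {set E}}) (s : seq {set E}) : Prop :=
  orders_bases Bs s /\
  forall i, i < size s -> exists l : E -> R,
    (forall j, j < size s ->
      (wt l (nth set0 s j) < wt l (nth set0 s i))%R = (j < i)) /\
    (forall j, 0 < j < size s -> (wt l (nth set0 s 0) < wt l (nth set0 s j))%R).

(** Restriction set of F_j for the ordering s: Rs subset F_j such that the
    faces of <F_1..F_j> not in <F_1..F_{j-1}> are exactly the subsets of F_j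
    containing Rs. *)
Definition is_restr (s : seq {set E}) (j : nat) (Rs : {set E}) : bool :=
  (Rs \subset nth set0 s j) &&
  [forall G : {set E},
     ([exists k : 'I_(size s), (k <= j) && (G \subset nth set0 s k)] &&
      [forall k : 'I_(size s), (k < j) ==> ~~ (G \subset nth set0 s k)])
     == ((Rs \subset G) && (G \subset nth set0 s j))].

Definition restr (s : seq {set E}) (j : nat) : {set E} :=
  odflt set0 [pick Rs | is_restr s j Rs].

Definition restrB (s : seq {set E}) (B : {set E}) : {set E} :=
  restr s (index B s).

Definition int_le (s : seq {set E}) (B1 B2 : {set E}) : bool := restrB s B1 \subset restrB s B2.
Definition int_lt (s : seq {set E}) (B1 B2 : {set E}) : bool := restrB s B1 \proper restrB s B2.
Definition int_min (Bs : {set {set E}}) (s : seq {set E}) (m : {set E}) : bool :=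
  (m \in Bs) && [forall C in Bs, int_le s m C].
Definition int_covers (Bs : {set {set E}}) (s : seq {set E}) (x y : {set E}) : bool :=
  [&& x \in Bs, y \in Bs, int_lt s x y &
      ~~ [exists C in Bs, int_lt s x C && int_lt s C y]].
Definition int_atom (Bs : {set {set E}}) (s : seq {set E}) (A : {set E}) : bool :=
  [exists m, int_min Bs s m && int_covers Bs s m A].

Definition atoms_below (Bs : {set {set E}}) (s : seq {set E}) (B' : {set E}) : {set {set E}} :=
  [set A in Bs | int_atom Bs s A && int_le s A B'].

Definition Bi_set (Bs : {set {set E}}) (s : seq {set E}) (I : {set E}) : {set {set E}} :=
  [set A in Bs | [exists i in I, restrB s A == [set i]]].

Definition int_rank_fun (Bs : {set {set E}}) (s : seq {set E}) (rho : {set E} -> nat) : Prop :=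
  (forall m, int_min Bs s m -> rho m = 0%N) /\
  (forall x y, int_covers Bs s x y -> rho y = (rho x).+1).

End Defs.

(* Main.v *)
Require Import Defs.
From HB Require Import structures.
From mathcomp Require Import all_boot all_order all_algebra.
From mathcomp Require Import reals.
From mathcomp Require Import zify.
Set Implicit Arguments. Unset Strict Implicit. Unset Printing Implicit Defensive.
Import Order.TTheory GRing.Theory Num.Theory.

Ltac clear_props := repeat match goal with H : ?T |- _ => lazymatch type of T with Prop => clear H end end.
Ltac clia := clear_props; lia.

Section Matroid.
Variable E : finType.
Variable Bs : {set {set E}}.
Hypothesis HM : matroid_bases Bs.

Lemma exch B1 B2 x : B1 \in Bs -> B2 \in Bs -> x \in B1 :\: B2 ->
  exists2 y, y \in B2 :\: B1 & (y |: (B1 :\ x)) \in Bs.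
Proof. by move=> h1 h2 hx; case: HM => _ H; exact: (H _ _ h1 h2 x hx). Qed.

Lemma bases_sub B1 B2 : B1 \in Bs -> B2 \in Bs -> B1 \subset B2 -> B1 = B2.
Proof.
move=> h1 h2 sub; apply/eqP; rewrite eqEsubset sub /=.
apply/subsetP => y yB2; apply/negPn/negP => yB1.
have [x] := exch h2 h1 (x:=y) (ltac:(by rewrite inE yB1)).
by rewrite inE => /andP[/negP xB2 xB1] _; apply: xB2; exact: (subsetP sub).
Qed.

Lemma bases_card B1 B2 : B1 \in Bs -> B2 \in Bs -> #|B1| = #|B2|.
Proof.
move=> h1 h2; move: {2}#|B1 :\: B2| (leqnn #|B1 :\: B2|) => n.
elim: n B1 h1 => [|n IH] B1 h1 hn.
  have sub : B1 \subset B2 by rewrite -setD_eq0 -cards_eq0; lia.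
  by rewrite (bases_sub h1 h2 sub).
case: (set_0Vmem (B1 :\: B2)) => [e0|[x xD]].
  have sub : B1 \subset B2 by rewrite -setD_eq0 e0.
  by rewrite (bases_sub h1 h2 sub).
have [y yD hB] := exch h1 h2 xD.
move: xD yD; rewrite !inE => /andP[xB2 xB1] /andP[yB1 yB2].
rewrite -(IH _ hB).
  rewrite cardsU1 !inE (negbTE yB1) andbF /= (cardsD1 x B1) xB1; lia.
have -> : (y |: B1 :\ x) :\: B2 = (B1 :\: B2) :\ x.
  apply/setP => z; rewrite !inE; case: (z =P y) => [->|]; rewrite ?yB2 ?andbF //.
  by case: (z =P x) => [->|]; rewrite ?xB2 //= ?andbF.
rewrite (cardsD1 x (B1 :\: B2)) !inE xB1 xB2 /= in hn; lia.
Qed.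


Lemma indP (X : {set E}) : reflect (exists2 B, B \in Bs & X \subset B) (indep Bs X).
Proof.
apply: (iffP existsP) => [[B /andP[h1 h2]]|[B h1 h2]]; first by exists B.
by exists B; rewrite h1 h2.
Qed.

Lemma indep_sub (X Y : {set E}) : indep Bs Y -> X \subset Y -> indep Bs X.
Proof. by move=> /indP[B hB sY] sXY; apply/indP; exists B => //; exact: subset_trans sY. Qed.

Lemma basis_indep (B : {set E}) : B \in Bs -> indep Bs B.
Proof. by move=> hB; apply/indP; exists B. Qed.

Lemma indep_card (X B : {set E}) : indep Bs X -> B \in Bs -> #|X| <= #|B|.
Proof.
by move=> /indP[B' hB' s] hB; rewrite -(bases_card hB' hB); exact: subset_leq_card.
Qed.

Lemma indep_full (X B : {set E}) : indep Bs X -> B \in Bs -> #|B| <= #|X| -> X \in Bs.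
Proof.
move=> /indP[B' hB' s] hB c.
have -> : X = B'; last by [].
apply/eqP; rewrite eqEcard s /= (bases_card hB' hB) //.
Qed.

Lemma swap_diff (A C : {set E}) x y : x \in A -> x \notin C -> y \in C ->
  (y |: (A :\ x)) :\: C = (A :\: C) :\ x.
Proof.
move=> xA xC yC; apply/setP => z; rewrite !inE; case: (z =P y) => [->|]; rewrite ?yC ?andbF //.
by case: (z =P x) => [->|]; rewrite ?(negbTE xC) //= ?andbF.
Qed.

Lemma aug (X Y : {set E}) : indep Bs X -> indep Bs Y -> #|X| < #|Y| ->
  exists2 y, y \in Y :\: X & indep Bs (y |: X).
Proof.
move=> /indP[BX hX sX] /indP[BY hY sY] cXY.
move: {2}#|BX :\: BY| (leqnn #|BX :\: BY|) => n.
elim: n BX hX sX => [|n IH] BX hX sX hn.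
- case: (set_0Vmem ((Y :\: X) :&: BX)) => [e0|[y]].
  + exfalso.
    have sub : BX \subset BY by rewrite -setD_eq0 -cards_eq0; lia.
    have eq := bases_sub hX hY sub.
    move: cXY; rewrite -(cardsID Y X) -(cardsID X Y) setIC.
    have -> : Y :\: X = set0.
      apply/setP => z; rewrite !inE; apply/negP => /andP[zX zY].
      move/setP: e0 => /(_ z); rewrite !inE zX zY /= eq (subsetP sY) //.
    by rewrite cards0; lia.
  + rewrite !inE => /andP[/andP[yX yY] yBX]; exists y; first by rewrite inE yX yY.
    by apply/indP; exists BX => //; rewrite subUset sub1set yBX sX.
- case: (set_0Vmem ((Y :\: X) :&: BX)) => [e0|[y]]; last first.
    rewrite !inE => /andP[/andP[yX yY] yBX]; exists y; first by rewrite inE yX yY.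
    by apply/indP; exists BX => //; rewrite subUset sub1set yBX sX.
  case: (set_0Vmem ((BX :\: BY) :\: X)) => [e1|[x]].
  + exfalso.
    have h1 : Y :\: X \subset BY :\: BX.
      apply/subsetP => z; rewrite !inE => /andP[zX zY]; rewrite (subsetP sY) // andbT.
      apply/negP => zB; move/setP: e0 => /(_ z); by rewrite !inE zX zY zB.
    have h2 : BX :\: BY \subset X :\: Y.
      apply/subsetP => z; rewrite !inE => /andP[zBY zBX].
      have zX : z \in X by apply/negPn/negP => zX; move/setP: e1 => /(_ z); rewrite !inE zX zBY zBX.
      rewrite zX andbT; apply/negP => zY; move: zBY; by rewrite (subsetP sY).
    have c1 := subset_leq_card h1; have c2 := subset_leq_card h2.
    have c3 : #|BY :\: BX| = #|BX :\: BY|.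
      by rewrite !cardsD (bases_card hY hX) setIC.
    move: cXY c1 c2 c3; rewrite -(cardsID Y X) -(cardsID X Y) setIC; clia.
  + rewrite !inE => /andP[xX /andP[xBY xBX]].
    have xD : x \in BX :\: BY by rewrite inE xBY xBX.
    have [y yD hB] := exch hX hY xD.
    move: yD; rewrite inE => /andP[yBX yBY].
    apply: (IH _ hB).
      apply/subsetP => z zX; rewrite !inE (subsetP sX) // andbT; apply/orP; right.
      by apply/negP => /eqP zx; move: xX; rewrite -zx zX.
    rewrite (swap_diff xBX xBY yBY).
    move: hn; rewrite (cardsD1 x (BX :\: BY)) !inE xBY xBX /= add1n ltnS; exact.
Qed.


Lemma extend (X U C : {set E}) : indep Bs X -> X \subset U -> C \in Bs -> C \subset U ->
  exists2 D, D \in Bs & (X \subset D) && (D \subset U).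
Proof.
move=> hX sXU hC sCU.
move: {2}(#|C| - #|X|) (leqnn (#|C| - #|X|)) => n.
elim: n X hX sXU => [|n IH] X hX sXU hn.
  by exists X; [apply: (indep_full hX hC); lia | rewrite subxx].
case: (leqP #|C| #|X|) => c.
  by exists X; [apply: (indep_full hX hC) | rewrite subxx].
have [y yD hy] := aug hX (basis_indep hC) c.
move: yD; rewrite inE => /andP[yX yC].
have [D hD /andP[s1 s2]] := IH _ hy (ltac:(by rewrite subUset sub1set (subsetP sCU) // sXU)) (ltac:(rewrite cardsU1 yX /=; lia)).
by exists D => //; rewrite s2 andbT; apply: subset_trans s1; exact: subsetUr.
Qed.

Lemma sym_exch (J C : {set E}) e : J \in Bs -> C \in Bs -> e \in J :\: C ->
  exists2 f, f \in C :\: J & (f |: (J :\ e) \in Bs) && (e |: (C :\ f) \in Bs).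
Proof.
move=> hJ hC; rewrite inE => /andP[eC eJ].
pose Z := [set f in C | e |: (C :\ f) \in Bs].
have ZC : Z \subset C by apply/subsetP => z; rewrite inE => /andP[].
have hb : ~~ indep Bs (e |: Z).
  apply/negP => hi.
  have [D hD /andP[s1 s2]] := extend hi (setUS _ ZC) hC (subsetUr _ _).
  have eD : e \in D by rewrite (subsetP s1) // setU11.
  case: (set_0Vmem (C :\: D)) => [e0|[f]].
    have sub : C \subset D by rewrite -setD_eq0 e0.
    by move: eC; rewrite (bases_sub hC hD sub) eD.
  rewrite inE => /andP[fD fC].
  have sD : D \subset e |: (C :\ f).
    apply/subsetP => z zD; move: (subsetP s2 z zD); rewrite !inE.
    case/orP=> [->//|zC]; rewrite zC andbT orbC; apply/orP; left.
    by apply/negP => /eqP zf; move: fD; rewrite -zf zD.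
  have eqD : D = e |: (C :\ f).
    apply/eqP; rewrite eqEcard sD /= (bases_card hD hC) cardsU1 !inE (negbTE eC) andbF /=.
    by rewrite (cardsD1 f C) fC.
  have fZ : f \in Z by rewrite inE fC -eqD.
  by move: fD; rewrite (subsetP s1) // inE fZ orbT.
case: (boolP [exists f in Z, f |: (J :\ e) \in Bs]) => [/existsP[f /andP[fZ hf]]|hno].
  exists f; last by move: fZ; rewrite inE => /andP[_ ->]; rewrite hf.
  rewrite inE (subsetP ZC) // andbT; apply/negP => fJ.
  have fe : f != e by apply/negP => /eqP fe; move: fZ; rewrite fe inE (negbTE eC).
  have eqf : f |: (J :\ e) = J :\ e by apply/setUidPr; rewrite sub1set in_setD1 fe fJ.
  by move: (bases_card hf hJ); rewrite eqf (cardsD1 e J) eJ; clia.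
exfalso.
pose T := J :\ e.
pose P := fun S : {set E} => [&& indep Bs S, Z \subset S & S \subset T :|: Z].
have PZ : P Z by rewrite /P (indep_sub (basis_indep hC) ZC) subxx subsetUr.
case: (arg_maxnP (fun S : {set E} => #|S|) PZ) => S /and3P[iS ZS ST] maxS.
case: (ltnP #|S| #|J|) => c.
  have [j jD hj] := aug iS (basis_indep hJ) c.
  move: jD; rewrite inE => /andP[jS jJ].
  case: (j =P e) => [je|/eqP jne].
    by move/negP: hb; apply; apply: (indep_sub hj); rewrite je; exact: (setUS [set e] ZS).
  have Pj : P (j |: S).
    rewrite /P hj (subset_trans ZS (subsetUr _ _)) /= subUset ST andbT sub1set.
    by rewrite !inE jne jJ.
  by move: (maxS _ Pj); rewrite cardsU1 jS /= ?add1n ?ltnn.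
have cT : #|T| < #|S| by move: c; rewrite /T (cardsD1 e J) eJ /=; clia.
have [y yD hy] := aug (indep_sub (basis_indep hJ) (subD1set _ _)) iS cT.
move: yD; rewrite inE => /andP[yT yS].
have yZ : y \in Z by move: (subsetP ST y yS); rewrite inE (negbTE yT).
have hB : y |: T \in Bs.
  apply: (indep_full hy hJ); rewrite cardsU1 yT /= /T (cardsD1 e J) eJ; clia.
by move/existsP: hno; apply; exists y; rewrite yZ hB.
Qed.


Section Weights.
Local Open Scope ring_scope.
Variable R : realType.
Variable l : E -> R.

Lemma wt_swap (A : {set E}) x y : x \in A -> y \notin A ->
  wt l (y |: (A :\ x)) = wt l A - l x + l y.
Proof.
move=> xA yA; rewrite /wt big_setU1 /=; last by rewrite inE (negbTE yA) andbF.
rewrite (big_setD1 x xA) /=; set S := (\sum_(i in A :\ x) l i).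
by rewrite [l x + S]addrC addrK addrC.
Qed.

Lemma locopt (J C : {set E}) : J \in Bs -> C \in Bs ->
  (forall e f, e \in J :\: C -> f \in C :\: J -> f |: (J :\ e) \in Bs -> l e <= l f) ->
  wt l J <= wt l C.
Proof.
move=> hJ; move: {2}#|C :\: J| (leqnn #|C :\: J|) => n.
elim: n C => [|n IH] C hn hC hyp.
  have sub : C \subset J by rewrite -setD_eq0 -cards_eq0; lia.
  by rewrite (bases_sub hC hJ sub).
case: (set_0Vmem (J :\: C)) => [e0|[e eD]].
  have sub : J \subset C by rewrite -setD_eq0 e0.
  by rewrite (bases_sub hJ hC sub).
have [f fD /andP[h1 h2]] := sym_exch hJ hC eD.
have lef := hyp _ _ eD fD h1.
move: (eD) (fD); rewrite !inE => /andP[eC eJ] /andP[fJ fC].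
have hn' : (#|(e |: (C :\ f)) :\: J| <= n)%N.
  rewrite (swap_diff fC fJ eJ); move: hn; rewrite (cardsD1 f (C :\: J)) !inE fJ fC /= add1n ltnS; exact.
have hyp' : forall e' f', e' \in J :\: (e |: (C :\ f)) -> f' \in (e |: (C :\ f)) :\: J ->
    f' |: (J :\ e') \in Bs -> (l e' <= l f')%R.
  move=> e' f'; rewrite inE => /andP[e'N e'J]; rewrite inE => /andP[f'J f'in] hB.
  apply: hyp hB.
    rewrite inE e'J andbT; apply/negP => e'C; move/negP: e'N; apply.
    rewrite !inE e'C andbT; apply/orP; right; apply/eqP => e'f; move: fJ; by rewrite -e'f e'J.
  rewrite inE f'J /=; move: f'in; rewrite !inE => /orP[/eqP f'e|/andP[_ //]].
  by move: f'J; rewrite f'e eJ.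
have := IH _ hn' h2 hyp'; rewrite (wt_swap fC eC) => H.
apply: le_trans H _.
by rewrite -addrA -[X in (_ <= X)%R]addr0 lerD2l addrC subr_le0.
Qed.

Lemma improve (J C : {set E}) : J \in Bs -> C \in Bs -> wt l C < wt l J ->
  exists e, exists f, [/\ e \in J :\: C, f \in C :\: J, f |: (J :\ e) \in Bs & l f < l e].
Proof.
move=> hJ hC lt.
case: (boolP [exists e, exists f, [&& e \in J :\: C, f \in C :\: J, f |: (J :\ e) \in Bs & l f < l e]]).
  move=> /existsP[e /existsP[f /and4P[a b c d]]]; by exists e, f.
move=> hno; exfalso.
have := locopt hJ hC _; rewrite leNgt lt => /(_ _)/notF; apply => e f a b c.
rewrite leNgt; apply/negP => d; move/negP: hno; apply; apply/existsP; exists e; apply/existsP; exists f.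
by rewrite a b c d.
Qed.

End Weights.

End Matroid.

Definition old (E : finType) (s : seq {set E}) k (G : {set E}) :=
  [exists m : 'I_(size s), (m < k) && (G \subset nth set0 s m)].
Definition Rset (E : finType) (s : seq {set E}) k :=
  [set e in nth set0 s k | old s k (nth set0 s k :\ e)].
Definition phi (E : finType) (s : seq {set E}) (G : {set E}) :=
  find (fun F : {set E} => G \subset F) s.

Section Shelling.
Variable E : finType.
Variable Bs : {set {set E}}.
Hypothesis HM : matroid_bases Bs.
Variable R : realType.
Variable s : seq {set E}.
Hypothesis Hord : orders_bases Bs s.
Hypothesis Hw : forall i, i < size s -> exists l : E -> R,
    forall j, j < size s -> (wt l (nth set0 s j) < wt l (nth set0 s i))%R = (j < i).

Local Notation F k := (nth set0 s k).

Lemma F_in k : k < size s -> F k \in Bs.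
Proof. by move=> hk; case: Hord => _ <-; exact: mem_nth. Qed.

Lemma idx_lt (D : {set E}) : D \in Bs -> index D s < size s.
Proof. by case: Hord => _ h; rewrite -h index_mem. Qed.

Lemma idx_nth (D : {set E}) : D \in Bs -> F (index D s) = D.
Proof. by case: Hord => _ h; rewrite -h => hD; exact: nth_index. Qed.

Lemma old_sub k (G H : {set E}) : G \subset H -> old s k H -> old s k G.
Proof.
move=> sGH /existsP[m /andP[a b]]; apply/existsP; exists m; rewrite a /=.
exact: subset_trans b.
Qed.

Lemma earlier k (D : {set E}) (l : E -> R) : k < size s -> D \in Bs ->
  (forall j, j < size s -> (wt l (F j) < wt l (F k))%R = (j < k)) ->
  (wt l D < wt l (F k))%R -> old s k (D).
Proof.
move=> hk hD hl lt; apply/existsP; exists (Ordinal (idx_lt hD)) => /=.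
by rewrite -hl ?idx_lt // idx_nth // lt subxx.
Qed.

Lemma newR k (G : {set E}) : k < size s -> G \subset F k -> (~~ old s k G) = (Rset s k \subset G).
Proof.
move=> hk sG; apply/idP/idP.
  move=> nold; apply/subsetP => e; rewrite inE => /andP[eF o].
  apply/negPn/negP => eG; move/negP: nold; apply; apply: old_sub o.
  by apply/subsetP => z zG; rewrite !inE (subsetP sG z zG) andbT; apply/eqP => ze; move: eG; rewrite -ze zG.
move=> sR; apply/negP => /existsP[m /andP[mk sGm]].
have [l hl] := Hw hk.
have hmk : (wt l (F m) < wt l (F k))%R by rewrite hl.
have [e [f [eD fD hD lfe]]] := improve HM (F_in hk) (F_in (ltn_ord m)) hmk.
move: (eD) (fD); rewrite !inE => /andP[eFm eFk] /andP[fFk fFm].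
have : old s k (f |: (F k :\ e)).
  apply: earlier hk hD hl _.
  by rewrite wt_swap // -addrA -[X in (_ < X)%R]addr0 ltrD2l addrC subr_lt0.
move/(old_sub (subsetUr _ _)) => o.
have eR : e \in Rset s k by rewrite inE eFk o.
by move: eFm; rewrite (subsetP sGm) // (subsetP sR).
Qed.

Lemma is_restr_R k : k < size s -> is_restr s k (Rset s k).
Proof.
move=> hk; rewrite /is_restr; apply/andP; split.
  by apply/subsetP => e; rewrite inE => /andP[].
apply/forallP => G; apply/eqP.
have -> : [exists k0 : 'I_(size s), (k0 <= k) && (G \subset nth set0 s k0)] &&
   [forall k0 : 'I_(size s), (k0 < k) ==> ~~ (G \subset nth set0 s k0)]
   = (G \subset F k) && ~~ old s k G.
  apply/idP/idP.
    move=> /andP[/existsP[m /andP[mk sGm]] /forallP hall].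
    have mk' : nat_of_ord m = k.
      apply/eqP; rewrite eqn_leq mk /=; rewrite leqNgt; apply/negP => lt.
      by move: (hall m); rewrite lt sGm.
    have sGk : G \subset F k by rewrite -mk'.
    rewrite sGk /=; apply/negP => /existsP[m' /andP[a b]].
    by move: (hall m'); rewrite a b.
  move=> /andP[sG nold]; apply/andP; split.
    by apply/existsP; exists (Ordinal hk); rewrite leqnn sG.
  apply/forallP => m; apply/implyP => mk; apply/negP => sGm.
  by move/negP: nold; apply; apply/existsP; exists m; rewrite mk sGm.
case sG: (G \subset F k); last by rewrite andbF.
by rewrite newR // andbT.
Qed.

Lemma is_restr_uniq k (R1 R2 : {set E}) : is_restr s k R1 -> is_restr s k R2 -> R1 = R2.
Proof.
have key : forall X Y, is_restr s k X -> is_restr s k Y -> Y \subset X.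
  move=> X Y /andP[sX /forallP hX] /andP[sY /forallP hY].
  move: (hX X) (hY X); rewrite subxx sX /= => /eqP ->.
  by move/eqP => /esym /andP[].
by move=> h1 h2; apply/eqP; rewrite eqEsubset !key.
Qed.

Lemma restr_eq k : k < size s -> restr s k = Rset s k.
Proof.
move=> hk; rewrite /restr; case: pickP => [X hX|none].
  by apply: is_restr_uniq hX (is_restr_R hk).
by move: (none (Rset s k)); rewrite is_restr_R.
Qed.

Lemma phi_eq k (G : {set E}) : k < size s -> (Rset s k \subset G) && (G \subset F k) = (phi s G == k).
Proof.
move=> hk; apply/idP/idP.
  move=> /andP[sR sG]; rewrite -(newR hk sG) in sR.
  rewrite /phi; case: (ltngtP (find (fun F : {set E} => G \subset F) s) k) => // c.
    suff : old s k G by rewrite (negbTE sR).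
    apply/existsP.
    have hl : find (fun F : {set E} => G \subset F) s < size s by apply: ltn_trans c hk.
    exists (Ordinal hl) => /=; rewrite c /=.
    by apply: (@nth_find _ set0 (fun F : {set E} => G \subset F)); rewrite has_find.
  by move: (before_find set0 c) => /=; rewrite sG.
move=> /eqP hp.
have hh : has (fun F : {set E} => G \subset F) s by rewrite has_find /phi in hp *; rewrite hp.
have sG : G \subset F k by rewrite -hp; exact: (nth_find set0 hh).
rewrite sG andbT -(newR hk sG); apply/negP => /existsP[m /andP[mk sGm]].
have mf : m < find (fun F : {set E} => G \subset F) s by move: hp; rewrite /phi => ->.
by move: (before_find set0 mf) => /=; rewrite sGm.
Qed.

Lemma phi_lt (G : {set E}) : indep Bs G -> phi s G < size s.
Proof.
move=> /indP[D hD sD]; rewrite /phi -has_find; apply/hasP; exists D => //.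
by case: Hord => _ ->.
Qed.

Lemma phi_new (G : {set E}) : indep Bs G -> (Rset s (phi s G) \subset G) && (G \subset F (phi s G)).
Proof. by move=> hG; rewrite phi_eq ?phi_lt. Qed.


Lemma phi_le (G : {set E}) m : m < size s -> G \subset F m -> phi s G <= m.
Proof.
move=> hm sG; rewrite leqNgt; apply/negP => lt.
by move: (before_find set0 lt) => /=; rewrite sG.
Qed.

Lemma Rset_sub k : Rset s k \subset F k.
Proof. by apply/subsetP => e; rewrite inE => /andP[]. Qed.

Lemma phi_Rset k : k < size s -> phi s (Rset s k) = k.
Proof. by move=> hk; apply/eqP; rewrite -phi_eq // subxx Rset_sub. Qed.

Lemma one_step k : k < size s -> Rset s k != set0 ->
  exists2 a, a \in Rset s k & Rset s (phi s (Rset s k :\ a)) = Rset s k :\ a.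
Proof.
move=> hk /set0Pn[a0 a0K].
set K := Rset s k.
have indK : forall X : {set E}, X \subset K -> indep Bs X.
  move=> X sX; apply/indP; exists (F k); first exact: F_in.
  exact: subset_trans sX (Rset_sub k).
case: (arg_maxnP (fun a => phi s (K :\ a)) a0K) => a aK maxa.
exists a => //.
have /andP[Rz sz] := phi_new (indK _ (subD1set K a)).
set z := phi s (K :\ a) in Rz sz *.
have hz : z < size s by apply: phi_lt; apply: indK; exact: subD1set.
apply/eqP; rewrite eqEsubset Rz /=.
apply/subsetP => g gKa; apply/negPn/negP => gRz.
move: (gKa); rewrite in_setD1 => /andP[ga gK].
set G0 := K :\ a :\ g.
have RG0 : Rset s z \subset G0.
  apply/subsetP => x xR; move: (subsetP Rz x xR) => xKa.
  by rewrite in_setD1 xKa andbT; apply/eqP => xg; move: gRz; rewrite -xg xR.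
have sG0 : G0 \subset F z by apply: subset_trans sz; exact: subD1set.
have nold : ~~ old s z G0 by rewrite (newR hz sG0); exact: RG0.
have /andP[_ sw] := phi_new (indK _ (subD1set K g)).
set w := phi s (K :\ g) in sw *.
have hw : w < size s by apply: phi_lt; apply: indK; exact: subD1set.
have wz : w <= z := maxa g gK.
have wz' : w != z.
  apply/eqP => wz'; rewrite wz' in sw.
  have sK : K \subset F z.
    apply/subsetP => x xK; case: (x =P g) => [->|/eqP xg].
      by apply: (subsetP sz); rewrite in_setD1 gK ga.
    by apply: (subsetP sw); rewrite in_setD1 xK xg.
  have h1 : phi s K <= z := phi_le hz sK.
  have h2 : z <= k := phi_le hk (subset_trans (subD1set K a) (Rset_sub k)).
  rewrite phi_Rset // in h1.
  have zk : z = k by apply/eqP; rewrite eqn_leq h1 h2.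
  by move: Rz; rewrite zk => /subsetP /(_ a aK); rewrite in_setD1 eqxx.
move/negP: nold; apply; apply/existsP; exists (Ordinal hw) => /=.
rewrite ltn_neqAle wz' wz /=; apply: subset_trans sw.
by apply/subsetP => x; rewrite !in_setD1 => /andP[-> /andP[_ ->]].
Qed.

End Shelling.

Section Pinned.
Variable E : finType.
Variable Bs : {set {set E}}.
Hypothesis HM : matroid_bases Bs.
Variable R : realType.
Variable s : seq {set E}.
Hypothesis Hp : pinned_bls R Bs s.

Local Notation F k := (nth set0 s k).

Lemma Hord : orders_bases Bs s.
Proof. by case: Hp. Qed.

Lemma Hw : forall i, i < size s -> exists l : E -> R,
    forall j, j < size s -> (wt l (nth set0 s j) < wt l (nth set0 s i))%R = (j < i).
Proof. by case: Hp => _ H i hi; have [l [h1 _]] := H i hi; exists l. Qed.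

Lemma size_pos : 0 < size s.
Proof.
case: HM => /set0Pn[B hB] _; have := idx_lt Hord hB; case: (size s) => //.
Qed.

Lemma uniq_s : uniq s. Proof. by case: Hord. Qed.

Lemma index_F k : k < size s -> index (F k) s = k.
Proof. by move=> hk; rewrite index_uniq // uniq_s. Qed.

Lemma F0_in : F 0 \in Bs.
Proof. exact: (F_in Hord size_pos). Qed.

Lemma Rset0 : Rset s 0 = set0.
Proof.
apply/setP => e; rewrite !inE; apply/negP => /andP[_ /existsP[m /andP[]]].
by rewrite ltn0.
Qed.

Lemma outB_R k : k < size s -> F k :\: F 0 \subset Rset s k.
Proof.
move=> hk; apply/subsetP => e eD.
have hF := F_in Hord hk.
have [f fD /andP[hD hC']] := sym_exch HM hF F0_in eD.
move: (eD) (fD); rewrite !inE => /andP[eF0 eFk] /andP[fFk fF0].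
case: Hp => _ /(_ k hk) [l [hl hpin]].
have lt1 : (l f < l e)%R.
  have hidx := idx_lt Hord hC'.
  have pos : 0 < index (e |: (F 0 :\ f)) s.
    rewrite lt0n; apply/negP => /eqP h0.
    have := idx_nth Hord hC'; rewrite h0 => h.
    by move: eF0; rewrite {1}h !inE eqxx.
  have := hpin (index (e |: (F 0 :\ f)) s) (ltac:(by rewrite pos hidx)); rewrite (idx_nth Hord hC') wt_swap //.
  by rewrite -addrA -[X in (X < _)%R]addr0 ltrD2l addrC subr_gt0.
have o : old s k (f |: (F k :\ e)).
  apply: (earlier Hord hk hD hl).
  by rewrite wt_swap // -addrA -[X in (_ < X)%R]addr0 ltrD2l addrC subr_lt0.
by rewrite eFk /=; apply: old_sub o; exact: subsetUr.
Qed.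

Definition Rb (B' : {set E}) := Rset s (index B' s).

Lemma restrB_eq B' : B' \in Bs -> restrB s B' = Rb B'.
Proof. by move=> hB; rewrite /restrB (restr_eq HM Hord Hw (idx_lt Hord hB)). Qed.

Lemma Rb_sub B' : B' \in Bs -> (B' :\: F 0 \subset Rb B') && (Rb B' \subset B').
Proof.
move=> hB; have hk := idx_lt Hord hB; have h := idx_nth Hord hB.
apply/andP; split; first by have := outB_R hk; rewrite h.
by have := Rset_sub s (index B' s); rewrite h.
Qed.

Lemma Rb_F0 : Rb (F 0) = set0.
Proof. by rewrite /Rb index_F ?size_pos // Rset0. Qed.

Lemma Rb_eq0 B' : B' \in Bs -> (Rb B' == set0) = (B' == F 0).
Proof.
move=> hB; apply/eqP/eqP => [h|->]; last exact: Rb_F0.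
have /andP[s1 _] := Rb_sub hB; rewrite h subset0 setD_eq0 in s1.
have X1 := bases_sub HM hB. have X2 := X1 _ F0_in. exact: X2 s1.
Qed.

Lemma Rb_phi B' : B' \in Bs -> phi s (Rb B') = index B' s.
Proof. by move=> hB; rewrite /Rb (phi_Rset HM Hord Hw (idx_lt Hord hB)). Qed.

Lemma Rb_inj B1 B2 : B1 \in Bs -> B2 \in Bs -> Rb B1 = Rb B2 -> B1 = B2.
Proof.
move=> h1 h2 e; rewrite -(idx_nth Hord h1) -(idx_nth Hord h2) -(Rb_phi h1) -(Rb_phi h2) e //.
Qed.

Lemma Bi_exists i B' : B' \in Bs -> i \in B' -> i \notin F 0 ->
  exists2 A, A \in Bs & Rb A = [set i].
Proof.
move=> hB iB iF0.
have ind : indep Bs [set i] by apply/indP; exists B'; rewrite // sub1set.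
have hk := phi_lt Hord ind.
have /andP[sR sF] := phi_new HM Hord Hw ind.
have hF := F_in Hord hk. exists (F (phi s [set i])); first exact: hF.
rewrite /Rb index_F //.
apply/eqP; rewrite eqEsubset sR /= sub1set.
apply: (subsetP (outB_R hk)); by rewrite inE iF0 (subsetP sF) // set11.
Qed.

Lemma Rb_single_notF0 A i : A \in Bs -> Rb A = [set i] -> (i \in A) && (i \notin F 0).
Proof.
move=> hA hR; have /andP[s1 s2] := Rb_sub hA.
have AF0 : A != F 0 by rewrite -Rb_eq0 // hR; apply/set0Pn; exists i; rewrite set11.
case: (set_0Vmem (A :\: F 0)) => [e0|[x xD]].
  by move: AF0; rewrite (bases_sub HM hA F0_in) ?eqxx // -setD_eq0 e0.
move: (subsetP s1 x xD); rewrite hR inE => /eqP xi; move: xD; by rewrite xi inE andbC.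
Qed.

Lemma int_min_E m : int_min Bs s m = (m == F 0).
Proof.
apply/idP/idP.
  move=> /andP[hm /forallP h]; move: (h (F 0)); rewrite F0_in /= /int_le.
  rewrite (restrB_eq hm) (restrB_eq F0_in) Rb_F0 subset0 Rb_eq0 //.
move=> /eqP ->; rewrite /int_min F0_in /=; apply/forallP => C; apply/implyP => hC.
by rewrite /int_le (restrB_eq F0_in) Rb_F0 sub0set.
Qed.

Lemma Rb_outF0 A : A \in Bs -> Rb A != set0 -> exists2 i, i \in Rb A & i \notin F 0.
Proof.
move=> hA nz; case: (set_0Vmem (Rb A :\: F 0)) => [e0|[i]]; last first.
  by rewrite inE => /andP[iF0 iR]; exists i.
exfalso; move: nz; rewrite Rb_eq0 // => /negP; apply; apply/eqP.
apply: (bases_sub HM hA F0_in); rewrite -setD_eq0; apply/eqP/setP => x.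
rewrite inE [RHS]inE; apply/negP => /andP[xF0 xA].
have /andP[s1 _] := Rb_sub hA.
have xR : x \in Rb A by apply: (subsetP s1); rewrite inE xF0 xA.
by move/setP: e0 => /(_ x); rewrite in_setD xF0 xR in_set0.
Qed.

Lemma atomE A : int_atom Bs s A = (A \in Bs) && [exists i, Rb A == [set i]].
Proof.
apply/idP/idP.
  move=> /existsP[m /andP[]]; rewrite int_min_E => /eqP -> /and4P[_ hA lt nob].
  rewrite hA /=; move: lt nob; rewrite /int_lt (restrB_eq F0_in) (restrB_eq hA) Rb_F0.
  rewrite proper0 => nz nob.
  have [i iR iF0] := Rb_outF0 hA nz.
  have /andP[_ s2] := Rb_sub hA.
  have [C hC RC] := Bi_exists hA (subsetP s2 i iR) iF0.
  apply/existsP; exists i; rewrite -RC eq_sym eqEproper RC sub1set iR /=; apply/negP => pr.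
  move/negP: nob; apply; apply/existsP; exists C; rewrite hC /=.
  rewrite (restrB_eq hC) RC proper0 pr andbT.
  by apply/set0Pn; exists i; rewrite set11.
move=> /andP[hA /existsP[i /eqP hR]].
apply/existsP; exists (F 0); rewrite int_min_E eqxx /= /int_covers F0_in hA /= /int_lt.
rewrite (restrB_eq F0_in) (restrB_eq hA) Rb_F0 hR proper0 /=.
apply/andP; split; first by apply/set0Pn; exists i; rewrite set11.
apply/negP => /existsP[C /andP[hC]]; rewrite (restrB_eq hC) proper0 => /andP[nz pr].
by move: (proper_card pr); rewrite cards1 ltnS leqn0 cards_eq0 (negbTE nz).
Qed.

End Pinned.

Section Atoms.
Variable E : finType.
Variable Bs : {set {set E}}.
Hypothesis HM : matroid_bases Bs.
Variable R : realType.
Variable s : seq {set E}.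
Hypothesis Hp : pinned_bls R Bs s.

Local Notation F k := (nth set0 s k).
Local Notation Rb := (Rb s).

Lemma atoms_iff B' I : B' \in Bs -> indep Bs I -> [disjoint I & F 0] ->
  (atoms_below Bs s B' == Bi_set Bs s I) = (B' :\: F 0 == I).
Proof.
move=> hB hI dI.
have /andP[s1 s2] := Rb_sub HM Hp hB.
apply/eqP/eqP.
- move=> eq; apply/setP => x; apply/idP/idP.
  + move=> xD; have xR := subsetP s1 x xD; move: xD; rewrite inE => /andP[xF0 xB].
    have [A hA RA] := Bi_exists HM Hp hB xB xF0.
    have : A \in atoms_below Bs s B'.
      rewrite /atoms_below inE hA (atomE HM Hp) hA /= /int_le (restrB_eq HM Hp hA) (restrB_eq HM Hp hB) RA sub1set xR andbT.
      by apply/existsP; exists x.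
    rewrite eq /Bi_set inE hA /= => /existsP[i /andP[iI]]; rewrite (restrB_eq HM Hp hA) RA => /eqP /set1_inj ->.
    exact: iI.
  + move=> xI.
    have xF0 : x \notin F 0 by apply/negP => xF; move: dI => /disjointFr /(_ xI); rewrite xF.
    have /indP[B'' hB'' sI] := hI.
    have [A hA RA] := Bi_exists HM Hp hB'' (subsetP sI x xI) xF0.
    have : A \in Bi_set Bs s I.
      by rewrite /Bi_set inE hA /=; apply/existsP; exists x; rewrite xI (restrB_eq HM Hp hA) RA eqxx.
    rewrite -eq /atoms_below inE => /and3P[_ _]; rewrite /int_le (restrB_eq HM Hp hA) (restrB_eq HM Hp hB) RA sub1set => xR.
    by rewrite inE xF0 (subsetP s2).
- move=> eq; apply/setP => A; rewrite /atoms_below /Bi_set !inE; case hA: (A \in Bs) => //=.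
  rewrite (atomE HM Hp) hA /= /int_le (restrB_eq HM Hp hA) (restrB_eq HM Hp hB).
  apply/idP/idP.
  + move=> /andP[/existsP[i /eqP RA] sub]; apply/existsP; exists i; rewrite RA eqxx andbT -eq.
    have /andP[iA iF0] := Rb_single_notF0 HM Hp hA RA.
    by rewrite inE iF0 /=; apply: (subsetP s2); rewrite (subsetP sub) // RA set11.
  + move=> /existsP[i /andP[iI /eqP RA]]; rewrite RA; apply/andP; split.
      by apply/existsP; exists i.
    by rewrite sub1set; apply: (subsetP s1); rewrite eq.
Qed.

End Atoms.

Section Alg.
Local Open Scope ring_scope.
Variable R : comNzRingType.
Variable E : finType.

Lemma prod_ite (a b : R) (A B : {set E}) : [disjoint A & B] ->
  \prod_(i : E) (if i \in A then a else if i \in B then b else 1) = a ^+ #|A| * b ^+ #|B|.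
Proof.
move=> dAB.
rewrite (bigID (fun i => i \in A)) /=.
rewrite (eq_bigr (fun _ => a)) => [|i ->//]; rewrite prodr_const.
rewrite (bigID (fun i => i \in B)) /=.
rewrite (eq_bigr (fun _ => b)) => [|i /andP[/negbTE -> ->]//].
rewrite [X in _ * (_ * X)](eq_bigr (fun _ => 1)) => [|i /andP[/negbTE -> /negbTE ->]//].
rewrite big1_eq mulr1 prodr_const.
congr (_ * _ ^+ _); apply: eq_card => i; rewrite unfold_in /=.
by case iB: (i \in B); rewrite ?andbT ?andbF // (disjointFl dAB iB).
Qed.

Lemma sum_interval (x y : R) (K T : {set E}) : K \subset T ->
  \sum_(J : {set E} | (K \subset J) && (J \subset T)) x ^+ #|J| * y ^+ (#|T| - #|J|)
  = x ^+ #|K| * (x + y) ^+ (#|T| - #|K|).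
Proof.
move=> sKT.
pose f i := if i \in T then x else 0.
pose g i := if i \in K then 0 else if i \in T then y else 1.
have h1 : \prod_(i : E) (f i + g i) = x ^+ #|K| * (x + y) ^+ (#|T| - #|K|).
  rewrite -(cardsDS sKT) -prod_ite; last first.
    by rewrite disjoint_sym; apply/pred0P => i /=; rewrite !inE; case: (i \in K); rewrite ?andbF.
  apply: eq_bigr => i _; rewrite /f /g !inE.
  case iK: (i \in K); first by rewrite (subsetP sKT) // addr0.
  by case: (i \in T); rewrite ?add0r.
rewrite -h1 (@bigA_distr R 0 1 *%R +%R E f g).
rewrite [RHS](bigID (fun J : {set E} => (K \subset J) && (J \subset T))) /=.
rewrite [X in _ = _ + X]big1 ?addr0 => [|J hJ].
  apply: eq_bigr => J /andP[sKJ sJT].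
  rewrite -(cardsDS sJT) -prod_ite; last first.
    by rewrite disjoint_sym; apply/pred0P => i /=; rewrite !inE; case: (i \in J); rewrite ?andbF.
  apply: eq_bigr => i _; rewrite /f /g !inE.
  case iJ: (i \in J); first by rewrite (subsetP sJT).
  by rewrite (negbTE (contraFN (subsetP sKJ i) iJ)).
case/nandP: hJ => [/subsetPn[i iK iJ]|/subsetPn[i iJ iT]].
  rewrite (bigD1 i) //= (negbTE iJ) /g iK mul0r //.
rewrite (bigD1 i) //= iJ /f (negbTE iT) mul0r //.
Qed.

End Alg.

Section Mrank.
Variable E : finType.
Variable Bs : {set {set E}}.
Hypothesis HM : matroid_bases Bs.

Lemma mrank_le (X : {set E}) : mrank Bs X <= #|X|.
Proof. by apply/bigmax_leqP => Y /andP[sY _]; exact: subset_leq_card. Qed.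

Lemma mrank_indep (X : {set E}) : indep Bs X -> mrank Bs X = #|X|.
Proof.
move=> hX; apply/eqP; rewrite eqn_leq mrank_le /=.
by apply: (leq_bigmax_cond (F := fun Y : {set E} => #|Y|)); rewrite subxx.
Qed.

Lemma set0_indep : indep Bs set0.
Proof. by case: HM => /set0Pn[B hB] _; apply/indP; exists B => //; exact: sub0set. Qed.

Lemma mrank_eq (X : {set E}) : mrank Bs X = #|X| -> indep Bs X.
Proof.
move=> h; case: (boolP (X == set0)) => [/eqP eX | nz]; first by rewrite eX; exact: set0_indep.
case nX: (indep Bs X) => //.
have : mrank Bs X <= #|X|.-1.
  apply/bigmax_leqP => Y /andP[sY iY].
  have : Y != X by apply/negP => /eqP e; move: nX; rewrite -e iY.
  rewrite eqEcard sY /= -ltnNge => lt; move: lt; clear; lia.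
rewrite h; move: nz; rewrite -cards_eq0; clear; lia.
Qed.
End Mrank.

Section Hvec.
Variable E : finType.
Variable Bs : {set {set E}}.
Hypothesis HM : matroid_bases Bs.
Variable R : realType.
Variable s : seq {set E}.
Hypothesis Hp : pinned_bls R Bs s.
Variable I : {set E}.
Hypothesis hI : indep Bs I.
Hypothesis dI : [disjoint I & nth set0 s 0].

Local Notation F k := (nth set0 s k).
Local Notation Rb := (Rb s).

Definition ind := contr_restr_indep Bs I (F 0).
Definition Bfam := [set B' in Bs | B' :\: F 0 == I].
Definition Kb (B' : {set E}) := Rb B' :&: F 0.
Definition dd := #|F 0| - #|I|.

Lemma disj_sub (J : {set E}) : J \subset F 0 -> [disjoint J & I].
Proof.
move=> sJ; rewrite disjoint_sym; apply/pred0P => x /=; apply/negP => /andP[xI xJ].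
by move: dI => /disjointFr /(_ xI); rewrite (subsetP sJ).
Qed.

Lemma indE (J : {set E}) : ind J = (J \subset F 0) && indep Bs (J :|: I).
Proof.
rewrite /ind /contr_restr_indep; case sJ: (J \subset F 0) => //=.
rewrite disj_sub //= (mrank_indep hI).
have cU : #|J :|: I| = #|J| + #|I|.
  by rewrite cardsU (disjoint_setI0 (disj_sub sJ)) cards0 subn0.
apply/eqP/idP => [h|h]; first by apply: (mrank_eq HM); rewrite h cU.
by rewrite (mrank_indep h) cU.
Qed.

Lemma Bfam_Rb B' : B' \in Bfam -> Rb B' = I :|: Kb B'.
Proof.
rewrite inE => /andP[hB /eqP eI].
have /andP[s1 s2] := Rb_sub HM Hp hB.
apply/setP => x; rewrite in_setU /Kb in_setI; case xF0: (x \in F 0); rewrite ?andbT ?andbF ?orbF.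
  by have -> : (x \in I) = false by rewrite -eI in_setD xF0.
apply/idP/idP => [xR|xI].
  by rewrite -eI in_setD xF0 (subsetP s2).
by apply: (subsetP s1); rewrite eI.
Qed.

Lemma Bfam_card B' : B' \in Bfam -> #|Rb B'| = #|I| + #|Kb B'|.
Proof.
move=> hB; rewrite (Bfam_Rb hB) cardsU.
have -> : I :&: Kb B' = set0.
  apply/setP => x; rewrite in_set0 in_setI /Kb in_setI; apply/negP => /andP[xI /andP[_ xF0]].
  by move: dI => /disjointFr /(_ xI); rewrite xF0.
by rewrite cards0 subn0.
Qed.

Lemma Bfam_T B' : B' \in Bfam -> #|B' :&: F 0| = dd.
Proof.
rewrite inE => /andP[hB /eqP eI].
rewrite /dd -(bases_card HM hB (F0_in HM Hp)) -(cardsID (F 0) B') eI; clear; lia.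
Qed.

Lemma Kb_sub B' : B' \in Bfam -> Kb B' \subset B' :&: F 0.
Proof.
rewrite inE => /andP[hB _]; have /andP[_ s2] := Rb_sub HM Hp hB.
by rewrite /Kb setSI.
Qed.

Definition pJ (J : {set E}) := F (phi s (J :|: I)).

Lemma notF0 x : x \in I -> x \notin F 0.
Proof. by move=> xI; move: dI => /disjointFr /(_ xI) ->. Qed.

Lemma pJ_fam (J : {set E}) : ind J -> pJ J \in Bfam.
Proof.
rewrite indE => /andP[sJ iJ].
have hk := phi_lt (Hord Hp) iJ.
have /andP[sR sG] := phi_new HM (Hord Hp) (Hw Hp) iJ.
have hB := F_in (Hord Hp) hk.
rewrite inE hB /=; apply/eqP/setP => x; rewrite in_setD /pJ.
apply/idP/idP.
  move=> /andP[xF0 xB].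
  have xR : x \in Rset s (phi s (J :|: I)) by apply: (subsetP (outB_R HM Hp hk)); rewrite in_setD xF0 xB.
  move: (subsetP sR x xR); rewrite in_setU; case/orP => // xJ.
  by move: xF0; rewrite (subsetP sJ).
move=> xI; rewrite notF0 //=; apply: (subsetP sG); by rewrite in_setU xI orbT.
Qed.

Lemma pJ_char B' (J : {set E}) : B' \in Bfam ->
  (ind J && (pJ J == B')) = (Kb B' \subset J) && (J \subset B' :&: F 0).
Proof.
move=> hF; have := hF; rewrite inE => /andP[hB /eqP eI].
have hRb := Bfam_Rb hF.
apply/idP/idP.
  move=> /andP[hJ /eqP e]; move: (hJ); rewrite indE => /andP[sJ iJ].
  have hk := phi_lt (Hord Hp) iJ.
  have /andP[sR sG] := phi_new HM (Hord Hp) (Hw Hp) iJ.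
  rewrite /pJ in e.
  have eR : Rb B' = Rset s (phi s (J :|: I)) by rewrite /Rb -e (index_F Hp hk).
  apply/andP; split.
    apply/subsetP => x; rewrite /Kb in_setI eR => /andP[xR xF0].
    move: (subsetP sR x xR); rewrite in_setU; case/orP => // xI.
    by move: xF0; rewrite (negbTE (notF0 xI)).
  by rewrite subsetI sJ andbT -e; apply: subset_trans sG; exact: subsetUl.
move=> /andP[sK sT].
have sJB : J :|: I \subset B'.
  rewrite subUset (subset_trans sT (subsetIl _ _)) /= -eI; exact: subsetDl.
have iJ : indep Bs (J :|: I) by apply/indP; exists B'.
have sJ : J \subset F 0 by apply: subset_trans sT (subsetIr _ _).
rewrite indE sJ iJ /=; apply/eqP; rewrite /pJ.
have hk := idx_lt (Hord Hp) hB.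
have : phi s (J :|: I) == index B' s.
  rewrite -(phi_eq HM (Hord Hp) (Hw Hp) _ hk) (idx_nth (Hord Hp) hB) sJB.
  rewrite -/(Rb B') hRb subUset subsetUr andbT; apply: subset_trans sK _; exact: subsetUl.
by move=> /eqP ->; rewrite (idx_nth (Hord Hp) hB).
Qed.

Lemma ind_card (J : {set E}) : ind J -> #|J| <= dd.
Proof.
rewrite indE => /andP[sJ iJ].
have := indep_card HM iJ (F0_in HM Hp).
rewrite cardsU (disjoint_setI0 (disj_sub sJ)) cards0 subn0 /dd; clear; lia.
Qed.

Lemma Bfam0 : pJ set0 \in Bfam.
Proof. by apply: pJ_fam; rewrite indE sub0set set0U hI. Qed.

Lemma cxd : cx_d ind = dd.
Proof.
apply/eqP; rewrite eqn_leq; apply/andP; split.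
  by apply/bigmax_leqP => J hJ; exact: ind_card.
have h0 := Bfam0.
have := pJ_char (pJ set0 :&: F 0) h0; rewrite subxx andbT (Kb_sub h0) => /andP[hJ _].
rewrite -(Bfam_T h0).
rewrite /cx_d; apply: (leq_bigmax_cond (F := fun Y : {set E} => #|Y|)); exact: hJ.
Qed.

Local Open Scope ring_scope.

Definition wJ (J : {set E}) : {poly int} := 'X^#|J| * (1 - 'X) ^+ (dd - #|J|).

Lemma H1 : hpoly ind = \sum_(J : {set E} | ind J) wJ J.
Proof.
rewrite /hpoly cxd.
rewrite (partition_big (fun J : {set E} => (inord #|J| : 'I_dd.+1)) xpredT) //=.
apply: eq_bigr => k _.
rewrite (eq_bigl (fun J => J \in [set X | ind X & #|X| == k])); last first.
  move=> J; rewrite inE; case hJ: (ind J) => //=.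
  by rewrite -val_eqE /= inordK // ltnS ind_card.
rewrite (eq_bigr (fun _ => 'X^k * (1 - 'X) ^+ (dd - k))); last first.
  by move=> J; rewrite inE /wJ => /andP[_ /eqP ->].
by rewrite sumr_const /fnum -natz rmorph_nat mulr_natl mulrnAl.
Qed.

Lemma H2 : \sum_(J : {set E} | ind J) wJ J =
  \sum_(B' in Bfam) \sum_(J : {set E} | (Kb B' \subset J) && (J \subset B' :&: F 0)) wJ J.
Proof.
rewrite (partition_big pJ (fun B => B \in Bfam)) //=; last exact: pJ_fam.
apply: eq_bigr => B' hB; apply: eq_bigl => J /=; exact: (pJ_char J hB).
Qed.

Lemma H3 B' : B' \in Bfam ->
  \sum_(J : {set E} | (Kb B' \subset J) && (J \subset B' :&: F 0)) wJ J = 'X^#|Kb B'|.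
Proof.
move=> hB; rewrite /wJ -(Bfam_T hB) sum_interval ?Kb_sub //.
by rewrite addrC subrK expr1n mulr1.
Qed.

Lemma hvecE j : hvec ind j = #|[set B' in Bfam | #|Kb B'| == j]|%:Z.
Proof.
rewrite /hvec H1 H2 (eq_bigr _ H3) coef_sum.
rewrite (eq_bigr (fun B' => if #|Kb B'| == j then 1 else 0)); last first.
  by move=> B' _; rewrite coefXn eq_sym; case: (_ == _).
rewrite -big_mkcondr.
rewrite (eq_bigl (fun B' => B' \in [set B' in Bfam | #|Kb B'| == j])); last first.
  by move=> B'; rewrite inE.
by rewrite sumr_const natz.
Qed.

End Hvec.

Section Rank.
Variable E : finType.
Variable Bs : {set {set E}}.
Hypothesis HM : matroid_bases Bs.
Variable R : realType.
Variable s : seq {set E}.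
Hypothesis Hp : pinned_bls R Bs s.

Lemma rho_eq (rho : {set E} -> nat) : int_rank_fun Bs s rho ->
  forall B', B' \in Bs -> rho B' = #|Rb s B'|.
Proof.
move=> [hmin hcov] B' hB.
move: {2}#|Rb s B'| (leqnn #|Rb s B'|) => n.
elim: n B' hB => [|n IH] B' hB hn.
  have e0 : Rb s B' = set0 by apply/eqP; rewrite -cards_eq0 -leqn0.
  rewrite e0 cards0; apply: hmin; rewrite (int_min_E HM Hp) -(Rb_eq0 HM Hp hB) e0 //.
case: (boolP (Rb s B' == set0)) => [/eqP e0|nz].
  rewrite e0 cards0; apply: hmin; rewrite (int_min_E HM Hp) -(Rb_eq0 HM Hp hB) e0 //.
have hk := idx_lt (Hord Hp) hB.
have [a aR ea] := one_step HM (Hord Hp) (Hw Hp) hk nz.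
set z := phi s (Rset s (index B' s) :\ a) in ea.
have iz : indep Bs (Rset s (index B' s) :\ a).
  apply/indP; exists B' => //; apply: subset_trans (subD1set _ _) _.
  by have /andP[_ ->] := Rb_sub HM Hp hB.
have hz : z < size s := phi_lt (Hord Hp) iz.
set C := nth set0 s z.
have hC : C \in Bs := F_in (Hord Hp) hz.
have RC : Rb s C = Rb s B' :\ a by rewrite /Rb /C (index_F Hp hz) ea.
have cC : #|Rb s B'| = (#|Rb s C|).+1 by rewrite RC (cardsD1 a (Rb s B')) aR.
have cov : int_covers Bs s C B'.
  rewrite /int_covers hC hB /int_lt (restrB_eq HM Hp hC) (restrB_eq HM Hp hB) RC properD1 //=.
  apply/negP => /existsP[D /andP[hD /andP]]; rewrite (restrB_eq HM Hp hD) -RC => [[p1 p2]].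
  by move: (proper_card p1) (proper_card p2); rewrite cC; clear; lia.
rewrite (hcov _ _ cov) cC (IH C) //; move: hn; rewrite cC; clear; lia.
Qed.

End Rank.

Theorem lemma7p2 (E : finType) (R : realType) (Bs : {set {set E}})
  (s : seq {set E}) (B I : {set E}) :
  matroid_bases Bs ->
  pinned_bls R Bs s ->
  B = nth set0 s 0 ->
  indep Bs I ->
  [disjoint I & B] ->
  (forall j : nat,
     (#|[set B' in Bs | (#|restrB s B'| == #|I| + j)%N
                        && (atoms_below Bs s B' == Bi_set Bs s I)]|%:Z
      = hvec (contr_restr_indep Bs I B) j)%R) /\
  (forall rho : {set E} -> nat, int_rank_fun Bs s rho ->
   forall j : nat,
     (#|[set B' in Bs | (rho B' == #|I| + j)%N
                        && (atoms_below Bs s B' == Bi_set Bs s I)]|%:Z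
      = hvec (contr_restr_indep Bs I B) j)%R).
Proof.
move=> HM Hp eB hI dI; subst B.
have key : forall j, [set B' in Bs | (#|restrB s B'| == #|I| + j)%N
                        && (atoms_below Bs s B' == Bi_set Bs s I)]
                     = [set B' in Bfam Bs s I | #|Kb s B'| == j].
  move=> j; apply/setP => B'; rewrite !inE; case hB: (B' \in Bs) => //=.
  rewrite (atoms_iff HM Hp hB hI dI); case e: (B' :\: nth set0 s 0 == I); rewrite ?andbF ?andbT //.
  rewrite (restrB_eq HM Hp hB) (Bfam_card HM Hp dI) ?eqn_add2l //.
  by rewrite inE hB e.
have H1 : forall j, (#|[set B' in Bs | (#|restrB s B'| == #|I| + j)%N
                        && (atoms_below Bs s B' == Bi_set Bs s I)]|%:Z
      = hvec (contr_restr_indep Bs I (nth set0 s 0)) j)%R.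
  by move=> j; rewrite key; have := hvecE HM Hp hI dI j; rewrite /ind => ->.
split => // rho hrho j; rewrite -H1; congr (Posz _); apply: eq_card => B'; rewrite !inE.
case hB: (B' \in Bs) => //=.
by rewrite (rho_eq HM Hp hrho hB) (restrB_eq HM Hp hB).
Qed.
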